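(* Assume CH. Then there exists a MAD family $\mathcal{A}\subseteq[\omega]^\omega$ such that (i) $\mathcal{A}$ is a $\lambda$-set, i.e. every countable subset of $\mathcal{A}$ is a relative $G_\delta$ subset of $\mathcal{A}$, and (ii) $\mathcal{A}$ is concentrated on the finite subsets of $\omega$, i.e. every open set $U\subseteq P(\omega)\cong 2^\omega$ containing $[\omega]^{<\omega}$ contains all but countably many elements of $\mathcal{A}$.
   Context: $[\omega]^\omega$ and $[\omega]^{<\omega}$ denote the sets of infinite and finite subsets of $\omega$; $P(\omega)$ is identified with $2^\omega$ via characteristic functions, with the product topology. A MAD family is an infinite set $\mathcal{A}\subseteq[\omega]^\omega$ such that any two distinct elements have finite intersection and every infinite subset of $\omega$ has infinite intersection with some element of $\mathcal{A}$. CH is the continuum hypothesis $2^{\aleph_0}=\aleph_1$. *)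

(* Defs.v *)
(* P(omega) = 2^omega is represented by the Cantor
   space [cantor_space] = prod_topology (fun _ : nat => bool), i.e. nat -> bool
   with the product topology; x : cantor_space is identified with the subset
   [set n | x n] of omega (characteristic function). *)
From HB Require Import structures.
From mathcomp Require Import all_boot all_order all_algebra.
From mathcomp Require Import all_classical all_reals all_analysis.
Set Implicit Arguments. Unset Strict Implicit. Unset Printing Implicit Defensive.
Local Open Scope classical_set_scope.

Definition setof (x : cantor_space) : set nat := [set n | x n].

Definition infinite_sub (x : cantor_space) : Prop := infinite_set (setof x).

Definition fin_subsets : set cantor_space :=
  [set x | finite_set (setof x)].

Definition MAD (A : set cantor_space) : Prop :=
  [/\ infinite_set A,
      (forall a, A a -> infinite_sub a),
      (forall a b, A a -> A b -> a <> b -> finite_set (setof a `&` setof b)) &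
      (forall y, infinite_sub y -> exists2 a, A a & infinite_set (setof y `&` setof a))].

Definition lambda_set (A : set cantor_space) : Prop :=
  forall B : set cantor_space, B `<=` A -> countable B ->
    exists G : nat -> set cantor_space,
      (forall n, open (G n)) /\ B = A `&` \bigcap_n G n.

Definition concentrated_on_fin (A : set cantor_space) : Prop :=
  forall U : set cantor_space, open U -> fin_subsets `<=` U -> countable (A `\` U).

Definition CH : Prop :=
  forall S : set cantor_space, countable S \/ (S #= [set: cantor_space])%card.

(* Main.v *)
Require Import Defs.
From mathcomp Require Import all_boot all_order all_algebra.
From mathcomp Require Import all_classical all_reals all_analysis.
From HB Require Import structures.
From mathcomp Require Import wochoice.
Set Implicit Arguments. Unset Strict Implicit. Unset Printing Implicit Defensive.
Local Open Scope classical_set_scope.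

Lemma bounded_finite (S : set nat) N : (forall t, S t -> (t < N)%N) -> finite_set S.
Proof. move=> h; apply: (sub_finite_set _ (finite_II N)) => t /h. by []. Qed.

Lemma finite_bounded (S : set nat) : finite_set S -> exists N, forall t, S t -> (t < N)%N.
Proof.
move=> /finite_fsetP[X ->]; exists (\max_(t <- finmap.enum_fset X) t).+1 => t /= tX.
by rewrite ltnS; apply: (@leq_bigmax_seq _ _ xpredT (fun x => x)) => //.
Qed.

Lemma infinite_ge (S : set nat) b : infinite_set S -> exists t, S t /\ (b <= t)%N.
Proof.
move=> inf; apply: contrapT => hn; apply: inf; apply: (@bounded_finite _ b) => t St.
by rewrite ltnNge; apply/negP => bt; apply: hn; exists t.
Qed.

Lemma unbounded_infinite (S : set nat) : (forall b, exists t, S t /\ (b <= t)%N) -> infinite_set S.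
Proof.
move=> h /finite_bounded[N hN]; have [t [St Nt]] := h N.
by have := hN t St; rewrite ltnNge Nt.
Qed.

Lemma super_infinite (A B : set nat) : A `<=` B -> infinite_set A -> infinite_set B.
Proof. by move=> AB iA fB; apply: iA; apply: sub_finite_set fB. Qed.

Section Step.
Variables (Y : set nat) (D : nat -> set nat) (P : nat -> set nat -> Prop)
  (q : nat -> nat -> nat -> nat).
Hypotheses (Yinf : infinite_set Y) (YD : forall j, finite_set (Y `&` D j))
  (HP : forall j F, finite_set F -> exists L, forall z : set nat,
        (forall t, (t < L)%N -> (z t <-> F t)) -> P j z)
  (qdisj : forall j n k n' k', q j n k = q j n' k' -> n = n')
  (qge : forall j n k, (n <= q j n k)%N).

Definition Q j n : set nat := [set t | exists k, q j n k = t].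

Record state := St { sF : set nat; sb : nat; sR : set nat }.

Record Inv i (s : state) : Prop := MkInv {
  iF : forall t, sF s t -> Y t /\ (t < sb s)%N;
  iR : forall t, sR s t -> Y t /\ (sb s <= t)%N;
  iRinf : infinite_set (sR s);
  ib : (i <= sb s)%N;
  iP : forall j, (j < i)%N -> forall z : set nat,
        (forall t, (t < sb s)%N -> (z t <-> sF s t)) -> P j z;
  iQ : forall j, (j < i)%N -> exists n, forall t, Q j n t -> ~ sF s t /\ ~ sR s t;
  iD : forall j, (j < i)%N -> forall t, sR s t -> ~ D j t }.

Record Tr (s s' : state) : Prop := MkTr {
  tF : sF s `<=` sF s';
  tnew : forall t, sF s' t -> ~ sF s t -> sR s t;
  tbig : exists t, sF s' t /\ (sb s <= t)%N;
  tb : (sb s <= sb s')%N;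
  tagree : forall t, (t < sb s)%N -> (sF s' t <-> sF s t);
  tR : sR s' `<=` sR s;
  tw : exists w, [/\ Y w, (sb s <= w)%N, (w < sb s')%N & ~ sF s' w] }.

Lemma step_ex i s : Inv i s -> exists s', Tr s s' /\ Inv i.+1 s'.
Proof.
case: s => F b R [/= hF hR Rinf ib hP hQ hD].
have Fq n : (b <= n)%N -> forall t, Q i n t -> ~ F t.
  move=> bn t [k <-] /hF[_]; rewrite ltnNge => /negP; apply.
  exact: leq_trans bn (qge _ _ _).
have [n [Fn Rn]] : exists n, (forall t, Q i n t -> ~ F t) /\ infinite_set (R `\` Q i n).
  have [h|h] := pselect (infinite_set (R `\` Q i b)); first by exists b; split=> //; exact: Fq.
  exists b.+1; split; first exact: Fq.
  move=> fin2; apply: Rinf.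
  have : finite_set ((R `\` Q i b) `|` (R `\` Q i b.+1)).
    by rewrite finite_setU; split=> //; apply: contrapT.
  apply: sub_finite_set => t Rt.
  have [[k qk]|nq] := pselect (Q i b t); last by left.
  right; split=> // -[k' qk']; have := qdisj (etrans qk (esym qk')).
  by move=> /eqP; rewrite eqn_leq ltnn andbF.
pose R1 := R `\` Q i n `\` D i.
have R1R t : R1 t -> R t by case=> -[].
have R1inf : infinite_set R1.
  apply: (@super_infinite ((R `\` Q i n) `\` (Y `&` D i))); last first.
    by apply: infinite_setD.
  move=> t [[Rt Qt] YDt]; split; first by split.
  by move=> Dt; apply: YDt; split=> //; have [] := hR t Rt.
have [L hL] := HP i (@bounded_finite F b (fun t Ft => (hF t Ft).2)).
have [m [R1m mge]] := infinite_ge (maxn b L) R1inf.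
have [w [R1w wge]] := infinite_ge m.+1 R1inf.
have [Ym bm] := hR m (R1R m R1m).
have bm' : (b <= m)%N by apply: leq_trans mge; apply: leq_maxl.
have Lm : (L <= m)%N by apply: leq_trans mge; apply: leq_maxr.
have [Yw bw] := hR w (R1R w R1w).
have mw : (m < w)%N by [].
have Fm : ~ F m by move=> /hF[_]; rewrite ltnNge bm'.
have Fw : ~ F w by move=> /hF[_]; rewrite ltnNge bw.
exists (St (F `|` [set m]) w.+1 (R1 `&` [set t | (w.+1 <= t)%N])); split.
  constructor=> /=.
  - by move=> t Ft; left.
  - by move=> t [//|->] _; exact: R1R.
  - by exists m; split; [right|].
  - by apply: leq_trans bw _.
  - move=> t tb; split=> [[//|tm]|]; last by left.
    by move: tb; rewrite tm ltnNge bm'.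
  - by move=> t [/R1R].
  - exists w; split=> //.
    case=> // wm; move: mw; rewrite wm ltnn //.
constructor=> /=.
- move=> t [/hF[Yt tb]|->]; last by split=> //; apply: ltn_trans mw _.
  by split=> //; apply: (leq_trans tb); apply: (leq_trans bw).
- by move=> t [/R1R/hR[Yt _] wt].
- apply: (@super_infinite (R1 `\` [set t | (t < w.+1)%N])); last first.
    by apply: infinite_setD => //; apply: (@bounded_finite _ w.+1).
  move=> t [R1t wt]; split=> //=; rewrite ltnNge; apply/negP => h; apply: wt; by rewrite /= ltnS.
- by rewrite ltnS (leq_trans ib bw).
- move=> j; rewrite ltnS leq_eqVlt => /orP[/eqP->|ji] z hz.
    apply: hL => t tL; have tm : (t < m)%N by apply: leq_trans tL Lm.
    rewrite hz; last by apply: ltn_trans tm (ltn_trans mw _).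
    split=> [[//|tm']|]; last by left.
    by move: tm; rewrite tm' ltnn.
  apply: (hP j ji) => t tb; rewrite hz; last by apply: leq_trans tb (leq_trans bw _).
  split=> [[//|tm]|]; last by left.
  by move: tb; rewrite tm ltnNge bm'.
- move=> j; rewrite ltnS leq_eqVlt => /orP[/eqP->|ji].
    exists n => t Qt; split.
      case=> [/(Fn t Qt)//|tm]; move: R1m; rewrite -tm => -[[_ ]]; by [].
    by case=> -[[_ ]].
  have [n' hn'] := hQ j ji; exists n' => t Qt; have [nF nR] := hn' t Qt; split.
    by case=> [//|tm]; apply: nR; rewrite tm; exact: R1R.
  by case=> /R1R.
- move=> j; rewrite ltnS leq_eqVlt => /orP[/eqP->|ji] t.
    by case=> -[].
  by case=> /R1R/(hD j ji).
Qed.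

Definition nxt i s := match pselect (exists s', Tr s s' /\ Inv i.+1 s') with
  | left h => projT1 (cid h) | right _ => s end.

Fixpoint stt i := match i with 0 => St set0 0 Y | i'.+1 => nxt i' (stt i') end.

Lemma stt_inv i : Inv i (stt i) /\ Tr (stt i) (stt i.+1).
Proof.
have I0 : Inv 0 (stt 0).
  by constructor=> //= t; split.
have H i' : Inv i' (stt i') -> Tr (stt i') (stt i'.+1) /\ Inv i'.+1 (stt i'.+1).
  move=> hI; rewrite /= /nxt; case: pselect => [h|[]]; last exact: step_ex.
  exact: (projT2 (cid h)).
elim: i => [|i [hI _]]; first by split=> //; have [] := H 0 I0.
by have [T1 I1] := H i hI; split=> //; have [] := H i.+1 I1.
Qed.

Lemma stt_mono i d :
  [/\ sF (stt i) `<=` sF (stt (i + d)),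
      (forall t, (t < sb (stt i))%N -> (sF (stt (i + d)) t <-> sF (stt i) t)),
      (forall t, sF (stt (i + d)) t -> ~ sF (stt i) t -> sR (stt i) t),
      sR (stt (i + d)) `<=` sR (stt i) &
      (sb (stt i) <= sb (stt (i + d)))%N].
Proof.
elim: d => [|d [h1 h2 h3 h4 h5]]; first by rewrite addn0; split=> // t ? ?.
rewrite addnS; have [_ [T1 T2 _ T4 T5 T6 _]] := stt_inv (i + d); split.
- by move=> t /h1/T1.
- move=> t tb; rewrite -h2 //; apply: T5; exact: leq_trans tb h5.
- move=> t Ft nFt; have [Fdt|nFdt] := pselect (sF (stt (i + d)) t).
    exact: h3.
  by apply: h4; apply: T2.
- by move=> t /T6/h4.
- exact: leq_trans h5 T4.
Qed.

Lemma stt_mono' i i' : (i <= i')%N ->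
  [/\ sF (stt i) `<=` sF (stt i'),
      (forall t, (t < sb (stt i))%N -> (sF (stt i') t <-> sF (stt i) t)),
      (forall t, sF (stt i') t -> ~ sF (stt i) t -> sR (stt i) t),
      sR (stt i') `<=` sR (stt i) &
      (sb (stt i) <= sb (stt i'))%N].
Proof. by move=> /subnKC <-; exact: stt_mono. Qed.

Definition alim : set nat := [set t | exists i, sF (stt i) t].

Lemma alim_agree i t : (t < sb (stt i))%N -> (alim t <-> sF (stt i) t).
Proof.
move=> tb; split; last by exists i.
case=> i' Ft; have [ii'|i'i] := leqP i i'.
  by have [_ h _ _ _] := stt_mono' ii'; rewrite -h.
by have [h _ _ _ _] := stt_mono' (ltnW i'i); apply: h.
Qed.

Lemma alim_late j t : alim t -> ~ sF (stt j) t -> sR (stt j) t.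
Proof.
case=> i' Ft nF; have [h1 _ h3 _ _] := stt_mono' (leq_maxl j i').
apply: h3 nF; have [g1 _ _ _ _] := stt_mono' (leq_maxr j i'); exact: g1.
Qed.

Theorem step_lemma : exists a : set nat,
  [/\ a `<=` Y, infinite_set a & infinite_set (Y `\` a)] /\
  [/\ (forall j, finite_set (a `&` D j)), (forall j, P j a) &
      (forall j, exists n, forall k, ~ a (q j n k))].
Proof.
exists alim; split; split.
- by move=> t [i /(iF (stt_inv i).1)[]].
- apply: unbounded_infinite => b0.
  have [_ [_ _ [t [Ft bt]] _ _ _ _]] := stt_inv b0.
  exists t; split; first by exists b0.+1.
  exact: leq_trans (ib (stt_inv b0).1) bt.
- apply: unbounded_infinite => b0.
  have [_ [_ _ _ _ _ _ [w [Yw bw wb nFw]]]] := stt_inv b0.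
  exists w; split; last exact: leq_trans (ib (stt_inv b0).1) bw.
  by split=> // /(alim_agree wb).
- move=> j; apply: (@bounded_finite _ (sb (stt j.+1))) => t [a_t Dt].
  rewrite ltnNge; apply/negP => bt.
  have nF : ~ sF (stt j.+1) t by move=> /(iF (stt_inv j.+1).1)[_]; rewrite ltnNge bt.
  by have := alim_late a_t nF; move=> /(iD (stt_inv j.+1).1 (ltnSn j))/(_ Dt).
- move=> j; apply: (iP (stt_inv j.+1).1 (ltnSn j)) => t tb; exact: alim_agree.
- move=> j; have [n hn] := iQ (stt_inv j.+1).1 (ltnSn j); exists n => k a_t.
  have [nF nR] := hn (q j n k) (ex_intro _ k erefl).
  by apply: nR; apply: alim_late.
Qed.

End Step.

Lemma T_uncountable : ~ countable [set: cantor_space].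
Proof.
move=> /pcard_surjP[g hg].
pose d : cantor_space := fun n => ~~ g n n.
have [n _ gn] := hg d I.
by have := congr1 (fun f : cantor_space => f n) gn; rewrite /d; case: (g n n).
Qed.

Section WO.
Variable R : rel cantor_space.
Hypothesis Rwo : well_order R.

Lemma woc : wo_chain R predT.
Proof. by move=> A _; apply: Rwo. Qed.

Lemma Rtot x y : R x y || R y x.
Proof. by have := @wo_chainW _ R predT woc; apply. Qed.

Lemma Ranti x y : R x y -> R y x -> x = y.
Proof.
move=> h1 h2; have := @wo_chain_antisymmetric _ R predT woc.
by move=> /(_ x y isT isT); apply; rewrite h1 h2.
Qed.

Lemma Rmin (S : set cantor_space) : (exists x, S x) -> exists z, S z /\ forall x, S x -> R z x.
Proof.
move=> [x Sx].
have [|z [[zS zmin] _]] := @Rwo (fun x => `[< S x >]).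
  by exists x; rewrite inE.
exists z; split; first by move: zS; rewrite inE.
by move=> y Sy; apply: zmin; rewrite inE.
Qed.

Definition lt0 x y := R x y /\ x <> y.

Lemma lt0_wf : well_founded lt0.
Proof.
move=> x; apply: contrapT => nA.
have [z [Sz zmin]] := Rmin (ex_intro (fun x => ~ Acc lt0 x) x nA).
apply: Sz; constructor => y [Ryz yz]; apply: contrapT => nAy.
by apply: yz; apply: Ranti => //; apply: zmin.
Qed.

Lemma lt0_tri x y : lt0 x y \/ x = y \/ lt0 y x.
Proof.
have [->|xy] := pselect (x = y); first by right; left.
have /orP[h|h] := Rtot x y; first by left.
by right; right; split=> // yx; apply: xy.
Qed.

Lemma lt0_trans x y z : lt0 x y -> lt0 y z -> lt0 x z.
Proof.
move=> [Rxy xy] [Ryz yz].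
pose S := [set w | w = x \/ w = y \/ w = z].
have [m [Sm mmin]] := Rmin (ex_intro S x (or_introl erefl)).
have mx := mmin x (or_introl erefl).
have my := mmin y (or_intror (or_introl erefl)).
have mz := mmin z (or_intror (or_intror erefl)).
case: Sm => [?|[?|?]]; subst m.
- split=> // xz; subst z; apply: yz; exact: Ranti.
- by case: xy; apply: Ranti.
- by case: yz; apply: Ranti.
Qed.
End WO.

Lemma omega1_order : CH -> exists lt : cantor_space -> cantor_space -> Prop,
  [/\ well_founded lt, (forall x y z, lt x y -> lt y z -> lt x z),
      (forall x y, lt x y \/ x = y \/ lt y x) &
      (forall x, countable [set y | lt y x])].
Proof.
move=> hCH; have [R Rwo] := well_ordering_principle cantor_space.
pose S := [set x | ~ countable [set y | lt0 R y x]].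
have [[x0 Sx0]|nS] := pselect (exists x, S x); last first.
  exists (lt0 R); split.
  - exact: lt0_wf.
  - exact: lt0_trans.
  - exact: lt0_tri.
  - by move=> x; apply: contrapT => h; apply: nS; exists x.
have [m [Sm mmin]] := Rmin Rwo (ex_intro S x0 Sx0).
pose I0 := [set y | lt0 R y m].
have [//|eq] := hCH I0.
move: eq; rewrite card_eq_sym card_eq_le => /andP[/pcard_leP[f] _].
pose h := (f : cantor_space -> cantor_space).
have hI x : I0 (h x) by apply: (@funS _ _ _ _ f x).
have hinj : injective h by move=> x y; apply: (@inj _ _ _ f); rewrite inE.
exists (fun u v => lt0 R (h u) (h v)); split.
- suff H : forall y, Acc (lt0 R) y -> forall u, h u = y ->
      Acc (fun u v => lt0 R (h u) (h v)) u.
    by move=> u; apply: (H (h u) (lt0_wf Rwo (h u)) u erefl).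
  move=> y A; elim: A => y' _ IH u e; constructor=> v hv.
  apply: (IH (h v) _ v erefl); rewrite -e; exact: hv.
- by move=> x y z; apply: (@lt0_trans R Rwo (h x) (h y) (h z)).
- move=> x y; have [H|[H|H]] := lt0_tri Rwo (h x) (h y).
  + by left.
  + by right; left; apply: hinj.
  + by right; right.
- move=> v; have nS : ~ S (h v).
    move=> Shv; have [Rhm hm] := hI v; apply: hm.
    exact: (Ranti Rwo Rhm (mmin _ Shv)).
  have /countable_injP[g hg] : countable [set y | lt0 R y (h v)] by apply: contrapT.
  apply/countable_injP; exists (g \o h) => x y xS yS /= gxy.
  by apply: hinj; apply: hg.
Qed.

Lemma enum_ex (C : set cantor_space) : countable C ->
  exists g : nat -> cantor_space, forall c, C c -> exists k, g k = c.
Proof. by move=> /pcard_surjP[g hg]; exists g => c /hg[k _ <-]; exists k. Qed.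

Definition ones : cantor_space := fun _ => true.
Lemma ones_inf : infinite_sub ones.
Proof.
move=> fin; apply: infinite_nat; apply: sub_finite_set fin => t _; done.
Qed.

Section Qsys.
Variable e : nat -> cantor_space.
Hypothesis he : forall k, infinite_sub (e k).

Definition pick (k b : nat) : nat := projT1 (cid (infinite_ge b (@he k))).
Lemma pickP (k b : nat) : e k (pick k b) /\ (b <= pick k b)%N.
Proof. exact: (projT2 (cid (infinite_ge b (@he k)))). Qed.

Definition dec t : nat * nat := odflt (0, 0)%N (unpickle t).

Fixpoint r t := match t with
  | 0 => pick (dec 0).2 (dec 0).1
  | t'.+1 => pick (dec t).2 (maxn (r t').+1 (dec t).1) end.

Lemma rP t : e (dec t).2 (r t) /\ ((dec t).1 <= r t)%N.
Proof.
case: t => [|t] /=; first exact: pickP.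
have [h1 h2] := pickP (dec t.+1).2 (maxn (r t).+1 (dec t.+1).1).
by split=> //; apply: leq_trans h2; apply: leq_maxr.
Qed.

Lemma r_inc t : (r t < r t.+1)%N.
Proof.
have [_ h2] := pickP (dec t.+1).2 (maxn (r t).+1 (dec t.+1).1).
by apply: leq_trans h2; apply: leq_maxl.
Qed.

Lemma r_mono a b : (a < b)%N -> (r a < r b)%N.
Proof.
elim: b => // b IH; rewrite ltnS leq_eqVlt => /orP[/eqP->|ab]; first exact: r_inc.
exact: ltn_trans (IH ab) (r_inc b).
Qed.

Lemma r_inj : injective r.
Proof.
move=> a b rab; case: (ltngtP a b) => // h.
  by have := r_mono h; rewrite rab ltnn.
by have := r_mono h; rewrite rab ltnn.
Qed.

Lemma qsys : exists q : nat -> nat -> nat,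
  [/\ (forall n k, e k (q n k)), (forall n k, (n <= q n k)%N) &
      (forall n k n' k', q n k = q n' k' -> n = n')].
Proof.
exists (fun n k => r (pickle (n, k))); split.
- by move=> n k; have [h _] := rP (pickle (n, k)); move: h; rewrite /dec pickleK.
- by move=> n k; have [_ h] := rP (pickle (n, k)); move: h; rewrite /dec pickleK.
- move=> n k n' k' /r_inj h.
  have := congr1 (@unpickle (nat * nat)%type) h; rewrite !pickleK.
  by case.
Qed.
End Qsys.

Lemma qs_ex (C : set cantor_space) : exists q : nat -> nat -> nat,
  [/\ (forall n k, (n <= q n k)%N), (forall n k n' k', q n k = q n' k' -> n = n') &
      (countable C -> forall c, C c -> infinite_sub c -> forall n, exists k, c (q n k))].
Proof.
have [cC|ncC] := pselect (countable C); last first.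
  have [q [_ h1 h2]] := @qsys (fun _ => ones) (fun _ => ones_inf).
  by exists q; split.
have [g hg] := enum_ex cC.
pose e k := if `[< infinite_sub (g k) >] then g k else ones.
have he k : infinite_sub (e k).
  rewrite /e; case: asboolP => // _; exact: ones_inf.
have [q [h0 h1 h2]] := qsys he; exists q; split=> // _ c Cc ic n.
have [k gk] := hg c Cc; exists k.
have ekc : e k = c.
  rewrite /e; case: asboolP => [_|nic]; first by [].
  by case: nic; rewrite gk.
by rewrite -ekc.
Qed.

Definition qs (C : set cantor_space) : nat -> nat -> nat := projT1 (cid (qs_ex C)).
Lemma qsP C : [/\ (forall n k, (n <= qs C n k)%N),
    (forall n k n' k', qs C n k = qs C n' k' -> n = n') &
    (countable C -> forall c, C c -> infinite_sub c -> forall n, exists k, c (qs C n k))].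
Proof. exact: (projT2 (cid (qs_ex C))). Qed.

Definition cyl (x : cantor_space) (L : nat) : set cantor_space :=
  [set z | forall i, (i < L)%N -> z i = x i].

Lemma cyl_nbhs (x : cantor_space) (U : set cantor_space) :
  nbhs x U -> exists L, cyl x L `<=` U.
Proof.
pose F := filter_from [set: nat] (cyl x).
have FF : Filter F.
  apply: filter_from_filter; first by exists 0%N.
  move=> i j _ _; exists (maxn i j) => // z hz; split=> k hk; apply: hz.
    by apply: leq_trans hk (leq_maxl _ _).
  by apply: leq_trans hk (leq_maxr _ _).
have : F --> x.
  apply/cvg_sup => i.
  apply/cvg_image => //.
    by apply/seteqP; split=> // b _; exists (fun=> b).
  move=> A; rewrite nbhs_principalE => /principal_filterP Axi.
  have [Anx|Anx] := pselect (A (~~ x i)).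
    exists (cyl x i); first by exists i.
    apply/seteqP; split=> [b [f _ <-]|b _]; first by case: (f i) (x i) Axi Anx => -[].
    exists (fun k => if k == i then b else x k) => /=; last by rewrite eqxx.
    by move=> k ki; rewrite (ltn_eqF ki).
  exists (cyl x i.+1); first by exists i.+1.
  apply/seteqP; split=> [b [f hf <-]|b Ab]; first by rewrite hf.
  by exists x => //; case: b (x i) Ab Anx Axi => -[].
move=> /(_ U) h nU.
by have [L _ ?] := h nU; exists L.
Qed.
Lemma open_coord (j : nat) : open [set x : cantor_space | x j].
Proof.
have -> : [set x : cantor_space | x j] = (fun x : cantor_space => x j) @^-1` [set true] by [].
apply: open_comp; last exact: discrete_open.
move=> x _; exact: (@proj_continuous nat (fun _ => bool) j x).
Qed.
Lemma closed1 (x : cantor_space) : closed [set x].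
Proof. apply: accessible_closed_set1; apply: hausdorff_accessible; exact: cantor_space_hausdorff. Qed.

Definition asT (z : set nat) : cantor_space := fun t => `[< z t >].
Lemma setof_asT F : setof (asT F) = F.
Proof. by apply/seteqP; split=> t; rewrite /setof /asT /= => /asboolP. Qed.

Definition dseq (m : nat) : seq bool := odflt [::] (unpickle m).
Definition Bm (m : nat) : set cantor_space :=
  [set z | forall i, (i < size (dseq m))%N -> z i = nth false (dseq m) i].
Definition phi (w : cantor_space) : set cantor_space := [set x | exists m, w m /\ Bm m x].

Lemma phi_P w (F : set nat) : finite_set F -> exists L, forall z : set nat,
  (forall t, (t < L)%N -> (z t <-> F t)) -> fin_subsets `<=` phi w -> phi w (asT z).
Proof.
move=> fF; have [h|nh] := pselect (fin_subsets `<=` phi w); last first.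
  by exists 0%N => z _ /nh.
have : fin_subsets (asT F) by rewrite /fin_subsets /= setof_asT.
move=> /h[m [wm Bmx]]; exists (size (dseq m)) => z hz _; exists m; split=> // i ii.
rewrite -(Bmx i ii) /asT; congr (`[< _ >]); apply/propext; exact: hz.
Qed.

Lemma phi_code (U : set cantor_space) : open U -> fin_subsets `<=` U ->
  exists w, phi w `<=` U /\ fin_subsets `<=` phi w.
Proof.
move=> oU fU; exists (fun m => `[< Bm m `<=` U >]); split.
  by move=> x [m [/asboolP h Bx]]; apply: h.
move=> x /fU Ux; have : nbhs x U by apply: open_nbhs_nbhs; split.
move=> /cyl_nbhs[L hL]; exists (pickle (mkseq x L)).
have ds : dseq (pickle (mkseq x L)) = mkseq x L by rewrite /dseq pickleK.
have Bc : Bm (pickle (mkseq x L)) `<=` cyl x L.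
  move=> z hz i iL; rewrite hz ds ?size_mkseq // nth_mkseq //.
split; first by apply/asboolP; apply: subset_trans Bc hL.
by move=> i; rewrite ds size_mkseq => iL; rewrite nth_mkseq.
Qed.

Lemma countable_sub T (A B : set T) : A `<=` B -> countable B -> countable A.
Proof. by move=> AB; apply: sub_countable; apply: subset_card_le. Qed.

Lemma countable_img T U (f : T -> U) (A : set T) : countable A -> countable (f @` A).
Proof. by apply: sub_countable; apply: card_image_le. Qed.

Lemma countableU T (A B : set T) : countable A -> countable B -> countable (A `|` B).
Proof.
move=> cA cB.
have -> : A `|` B = \bigcup_(i in [set: bool]) (if i then A else B).
  apply/seteqP; split=> x; first by case=> h; [exists true|exists false].
  by case=> -[] _ h; [left|right].
by apply: bigcup_countable => // -[].
Qed.

Section Main.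
Local Notation T := cantor_space.
Variable lt : T -> T -> Prop.
Hypotheses (lt_wf : well_founded lt) (lt_trans : forall x y z, lt x y -> lt y z -> lt x z)
  (lt_tri : forall x y, lt x y \/ x = y \/ lt y x)
  (lt_cnt : forall x, countable [set y | lt y x]).

Definition le' b a := lt b a \/ b = a.

Definition Cg (g : T -> option T) c : set T := [set x | exists b, lt b c /\ g b = Some x].

Record Spec a (g : T -> option T) (x : T) : Prop := MkSpec {
  sp_cond : infinite_sub a;
  sp_ad0 : forall c, Cg g a c -> finite_set (setof a `&` setof c);
  sp_sub : setof x `<=` setof a;
  sp_inf : infinite_sub x;
  sp_rest : infinite_set (setof a `\` setof x);
  sp_ad : forall c, Cg g a c -> finite_set (setof x `&` setof c);
  sp_phi : forall b, le' b a -> fin_subsets `<=` phi b -> phi b x;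
  sp_q : forall c, le' c a -> exists n, forall k, ~ x (qs (Cg g c) n k) }.

Definition Fstep a (g : T -> option T) : option T :=
  match pselect (exists x, Spec a g x) with
  | left h => Some (projT1 (cid h)) | right _ => None end.

Definition restr a (f : forall b, lt b a -> option T) : T -> option T :=
  fun b => match pselect (lt b a) with left h => f b h | right _ => None end.

Definition sel : T -> option T := Fix lt_wf (fun _ => option T) (fun a f => Fstep a (restr f)).

Definition rsel a : T -> option T := fun b => if pselect (lt b a) then sel b else None.

Lemma sel_eq a : sel a = Fstep a (rsel a).
Proof.
rewrite /sel Fix_eq; first by congr Fstep; apply: funext => b; rewrite /restr /rsel /sel; case: pselect.
move=> x f g fg; congr Fstep.
by apply: funext => b; rewrite /restr; case: pselect.
Qed.

Definition C c := Cg sel c.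

Lemma Cg_rsel a c : le' c a -> Cg (rsel a) c = C c.
Proof.
move=> ca; apply/seteqP; split=> x [b [bc e]]; exists b; split=> //.
  by move: e; rewrite /rsel; case: pselect.
rewrite /rsel; case: pselect => // nb; case: nb; case: ca => [ca|<-] //.
exact: lt_trans bc ca.
Qed.

Lemma seg_le_cnt a : countable [set b | le' b a].
Proof.
apply: (@countable_sub _ _ ([set b | lt b a] `|` [set a])); last first.
  by apply: countableU.
by move=> b [h|->]; [left|right].
Qed.

Lemma Cg_cnt g c : countable (Cg g c).
Proof.
apply: (@countable_sub _ _ ((fun b => odflt point (g b)) @` [set b | lt b c])).
  by move=> x [b [bc e]]; exists b => //; rewrite e.
exact/countable_img.
Qed.

Lemma spec_ex a g : infinite_sub a ->
  (forall c, Cg g a c -> finite_set (setof a `&` setof c)) -> exists x, Spec a g x.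
Proof.
move=> ia ada.
have [s hs] := enum_ex (seg_le_cnt a).
have [e he] := enum_ex (Cg_cnt g a).
pose D j := if `[< Cg g a (e j) >] then setof (e j) else set0.
pose P j (z : set nat) := fin_subsets `<=` phi (s j) -> phi (s j) (asT z).
pose q j := qs (Cg g (s j)).
have YD j : finite_set (setof a `&` D j).
  by rewrite /D; case: asboolP => h; [exact: ada|rewrite setI0; exact: finite_set0].
have HP j F : finite_set F -> exists L, forall z : set nat,
    (forall t, (t < L)%N -> (z t <-> F t)) -> P j z.
  by move=> fF; have [L hL] := phi_P (s j) fF; exists L.
have qdisj j n k n' k' : q j n k = q j n' k' -> n = n'.
  by have [_ h _] := qsP (Cg g (s j)); apply: h.
have qge j n k : (n <= q j n k)%N by have [h _ _] := qsP (Cg g (s j)); apply: h.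
have [x [[xY xinf Yx] [xD xP xQ]]] := @step_lemma (setof a) D P q ia YD HP qdisj qge.
exists (asT x); constructor=> //; rewrite ?setof_asT //.
- by rewrite /infinite_sub setof_asT.
- move=> c /[dup] Cc /he[j ejc]; have := xD j; rewrite /D ejc asboolT //.
- by move=> b /hs[j <-]; apply: xP.
- move=> c /hs[j <-]; have [n hn] := xQ j; exists n => k.
  by rewrite /asT => /asboolP; apply: hn.
Qed.

Lemma selP a x : sel a = Some x -> Spec a (rsel a) x.
Proof.
rewrite sel_eq /Fstep; case: pselect => // h [<-]; exact: (projT2 (cid h)).
Qed.

Lemma selE a : infinite_sub a -> (forall c, C a c -> finite_set (setof a `&` setof c)) ->
  exists x, sel a = Some x.
Proof.
move=> ia ada; rewrite sel_eq /Fstep; case: pselect => [h|nh]; first by eexists.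
exfalso; apply: nh; apply: spec_ex => //; rewrite Cg_rsel //; by right.
Qed.

Definition A : set T := [set x | exists a, sel a = Some x].
Definition st (x : T) : T := xget point [set a | sel a = Some x].
Lemma stP x : A x -> sel (st x) = Some x.
Proof. by move=> h; exact: (xgetPex point h). Qed.

Lemma A_elem_inf x : A x -> infinite_sub x.
Proof. by case=> a /selP/sp_inf. Qed.

Lemma adC a x c : sel a = Some x -> C a c -> finite_set (setof x `&` setof c).
Proof. by move=> /selP h Cc; apply: (sp_ad h); rewrite Cg_rsel //; right. Qed.

Lemma A_ad x y : A x -> A y -> x <> y -> finite_set (setof x `&` setof y).
Proof.
move=> [a ha] [b hb] xy; case: (lt_tri a b) => [ab|[e|ba]].
- by rewrite setIC; apply: (adC hb); exists a.
- by subst; rewrite ha in hb; case: hb.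
- by apply: (adC ha); exists b.
Qed.

Lemma A_max y : infinite_sub y -> exists2 x, A x & infinite_set (setof y `&` setof x).
Proof.
move=> iy.
have [[c [[b [_ hb]] ic]]|nc] :=
  pselect (exists c, C y c /\ infinite_set (setof y `&` setof c)).
  by exists c => //; exists b.
have [x hx] : exists x, sel y = Some x.
  apply: selE => // c Cc; apply: contrapT => ic; apply: nc; by exists c.
exists x; first by exists y.
have h := selP hx; rewrite setIidr; [exact: sp_inf h|exact: sp_sub h].
Qed.

Lemma max_seq (s : seq T) : s != [::] ->
  exists2 x, x \in s & forall y, y \in s -> le' (st y) (st x).
Proof.
elim: s => // x s IH _; case: (eqVneq s [::]) => [->|sn].
  by exists x; [rewrite mem_head|move=> y; rewrite mem_seq1 => /eqP->; right].
have [m ms mmax] := IH sn; case: (lt_tri (st x) (st m)) => [xm|[xm|mx]].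
- exists m; first by rewrite inE ms orbT.
  by move=> y; rewrite inE => /orP[/eqP->|ys]; [left|exact: mmax].
- exists m; first by rewrite inE ms orbT.
  by move=> y; rewrite inE => /orP[/eqP->|ys]; [right|exact: mmax].
- exists x; first by rewrite mem_head.
  move=> y; rewrite inE => /orP[/eqP->|/mmax[ym|->]]; [by right| |by left].
  by left; apply: lt_trans ym mx.
Qed.

Lemma A_infinite : infinite_set A.
Proof.
move=> fA; have [x0 Ax0 _] := A_max ones_inf.
move: fA => /finite_fsetP[X AX].
have [|m mX mmax] := @max_seq (finmap.enum_fset X).
  apply/eqP => e; move: Ax0; rewrite AX => h.
  have h2 : x0 \in finmap.enum_fset X := h.
  by rewrite e in h2.
have Am : A m by rewrite AX; exact: mX.
have hm := stP Am; have h := selP hm.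
pose Z := setof (st m) `\` setof m.
have iZ : infinite_sub (asT Z) by rewrite /infinite_sub setof_asT; exact: sp_rest h.
have [b Ab ib] := A_max iZ.
apply: ib; rewrite setof_asT.
have [->|bm] := pselect (b = m).
  by apply: (sub_finite_set _ (finite_set0 nat)) => t [[_ ?] ?].
have bX : b \in finmap.enum_fset X by move: Ab; rewrite AX => hb; exact: hb.
have [lb|eb] := mmax b bX; last first.
  by case: bm; have := stP Ab; rewrite eb hm => -[].
have : finite_set (setof (st m) `&` setof b).
  by apply: (sp_ad0 h); rewrite Cg_rsel; [exists (st b); split=> //; exact: stP|right].
by apply: sub_finite_set => t [[? _] ?].
Qed.

Lemma bound (B : set T) : countable B -> exists g, forall b, B b -> lt b g.
Proof.
move=> cB; pose U := \bigcup_(b in B) ([set y | lt y b] `|` [set b]).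
have cU : countable U by apply: bigcup_countable => // b _; apply: countableU.
have [g Ug] : exists g, ~ U g.
  apply: contrapT => h; apply: T_uncountable; apply: countable_sub cU => g _.
  by apply: contrapT => nU; apply: h; exists g.
exists g => b Bb; case: (lt_tri b g) => [//|[e|gb]]; case: Ug; exists b => //.
  by right.
by left.
Qed.

Lemma A_lambda : lambda_set A.
Proof.
move=> B BA cB.
have [g hg] := bound (countable_img st cB).
have Bg b : B b -> lt (st b) g by move=> Bb; apply: hg; exists b.
pose q := qs (C g).
have qcov c : C g c -> forall n, exists k, c (q n k).
  move=> Cc; have [_ _ h] := qsP (C g); apply: h => //; first exact: Cg_cnt.
  by case: Cc => b [_ hb]; apply: A_elem_inf; exists b.
pose E := C g `\` B.
have [e he] := enum_ex (countable_sub (@subDsetl _ _ _) (Cg_cnt sel g) : countable E).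
pose O m := \bigcup_k [set x : T | x (q m k)].
pose G n := if odd n then (if `[< B (e n./2) >] then setT else ~` [set e n./2])
            else O n./2.
exists G; split.
  move=> n; rewrite /G; case: (odd n).
    case: asboolP => _; first exact: openT.
    by rewrite openC; apply: closed1.
  by apply: bigcup_open => k _; apply: open_coord.
apply/seteqP; split.
  move=> b Bb; split; first exact: BA.
  move=> n _; rewrite /G; case: (odd n).
    case: asboolP => // nB eb; apply: nB; by rewrite -eb.
  have Cb : C g b by exists (st b); split; [exact: (Bg b Bb)|exact: (stP (BA b Bb))].
  by have [k hk] := qcov b Cb n./2; exists k.
move=> x [Ax Gx]; have hx := stP Ax.
case: (lt_tri (st x) g) => [xg|gx].
  apply: contrapT => nB.
  have [n en] := he x (conj (ex_intro _ (st x) (conj xg hx)) nB).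
  have := Gx n.*2.+1 I; rewrite /G /= odd_double uphalf_double /=.
  by rewrite en; case: asboolP => [/nB|_ /(_ erefl)].
have lgx : le' g (st x) by case: gx => [ee|l]; [right; rewrite ee|left].
have [n hn] := sp_q (selP hx) lgx.
rewrite Cg_rsel // in hn.
have := Gx n.*2 I; rewrite /G odd_double /= doubleK => -[k _ xk].
by case: (hn k xk).
Qed.

Lemma A_conc : concentrated_on_fin A.
Proof.
move=> U oU fU; have [w [wU fw]] := phi_code oU fU.
apply: (@countable_sub _ _ ((fun b => odflt point (sel b)) @` [set b | lt b w])); last first.
  exact/countable_img.
move=> x [Ax nU]; have hx := stP Ax; exists (st x); last by rewrite hx.
case: (lt_tri (st x) w) => [//|wx]; exfalso; apply: nU; apply: wU.
apply: (sp_phi (selP hx)) => //; by case: wx => [e|l]; [right; rewrite e|left].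
Qed.

End Main.

Theorem theorem4 : CH ->
  exists A : classical_sets.set cantor_space,
    MAD A /\ lambda_set A /\ concentrated_on_fin A.
Proof.
move=> hCH; have [lt [wf tr tri cnt]] := omega1_order hCH.
exists (A wf); split; first split.
- by apply: A_infinite.
- by move=> a; apply: A_elem_inf.
- by move=> a b Aa Ab ab; apply: (@A_ad lt wf).
- by move=> y iy; apply: (@A_max lt wf).
split.
- by apply: (@A_lambda lt wf).
- by apply: (@A_conc lt wf).
Qed.
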